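(* Let $a:[0,\infty)\to[0,\infty)$ be non-negative and non-decreasing, let $f(x)=\exp\bigl(-\int_0^x a(y)\,dy\bigr)$ for $x\ge 0$ (so that $a=-f'/f$), let $\mathcal L(\gamma)=\int_0^\infty e^{-\gamma x}f(x)\,dx$ and $\gamma_{\min}=\inf\{\gamma\in\mathbb R:\mathcal L(\gamma)<\infty\}$ (so $\gamma_{\min}=-\lim_{x\to\infty}a(x)\in[-\infty,0]$). Fix $s\ge 1$. The stationary distribution of the controlled $s$-server system described in the context exists (i) for the global control, i.e. admission probabilities $p_s(k)$ with $p_s(0)\cdots p_s(n)=f\bigl(\tfrac{n+1}{\sqrt s}\bigr)$ for all $n\in\mathbb N_0$, if and only if $0\le\rho<e^{-\gamma_{\min}/\sqrt s}$ (and $e^{-\gamma_{\min}/\sqrt s}=1-\gamma_{\min}/\sqrt s+O(1/s)$); (ii) for the local control, i.e. $p_s(k)=\bigl(1+\tfrac{1}{\sqrt s}a\bigl(\tfrac{k+1}{\sqrt s}\bigr)\bigr)^{-1}$ for $k\in\mathbb N_0$, if and only if $0\le\rho<1-\gamma_{\min}/\sqrt s$. (Here an upper bound equal to $+\infty$ means that the stationary distribution exists for all $\rho\ge0$.)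
   Context: The system: $s$ parallel servers, customers arrive according to a Poisson process of rate $\lambda=s\rho$, service times are i.i.d. exponential with mean $1$, all interarrival and service times independent. A customer who upon arrival finds all servers busy and $k$ other customers waiting is admitted with probability $p_s(k)$ and rejected otherwise; customers finding an idle server are always admitted. The number of customers in the system is then a birth–death process with birth rate $\lambda$ in states $0,\dots,s-1$, birth rate $\lambda p_s(k-s)$ in states $k\ge s$, and death rate $\min\{k,s\}$ in state $k$. Its stationary distribution, when it exists, is $\pi_k=\pi_0(s\rho)^k/k!$ for $0\le k\le s$ and $\pi_k=\pi_0\frac{s^s\rho^k}{s!}\prod_{i=0}^{k-s-1}p_s(i)$ for $k>s$, with $\pi_0^{-1}=\sum_{k=0}^s\frac{(s\rho)^k}{k!}+\frac{(s\rho)^s}{s!}F_s(\rho)$, where $F_s(\rho)=\sum_{n=0}^\infty p_s(0)\cdots p_s(n)\,\rho^{n+1}$; it exists if and only if $F_s(\rho)<\infty$. *)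

(* Defs.v *)
From Stdlib Require Import Reals.
From Coquelicot Require Import Coquelicot.
Open Scope R_scope.

Definition fa (a : R -> R) (x : R) : R := exp (- RInt a 0 x).

(* L(gamma) < oo : the improper integral \int_0^oo e^{-gamma x} f(x) dx
   is finite (integrand positive, so this is convergence). *)
Definition L_finite (a : R -> R) (g : R) : Prop :=
  ex_RInt_gen (fun x => exp (- g * x) * fa a x)
    (at_point 0) (Rbar_locally p_infty).

Definition gamma_min (a : R -> R) : Rbar := Glb_Rbar (L_finite a).

Definition global_bound (a : R -> R) (s : nat) : Rbar :=
  match gamma_min a with
  | Finite g => Finite (exp (- g / sqrt (INR s)))
  | m_infty => p_infty
  | p_infty => Finite 0
  end.

Definition local_bound (a : R -> R) (s : nat) : Rbar :=
  match gamma_min a with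
  | Finite g => Finite (1 - g / sqrt (INR s))
  | m_infty => p_infty
  | p_infty => m_infty
  end.

Fixpoint prefix_prod (p : nat -> R) (n : nat) : R :=
  match n with
  | O => p O
  | S m => prefix_prod p m * p (S m)
  end.

Definition local_control (a : R -> R) (s : nat) (k : nat) : R :=
  / (1 + / sqrt (INR s) * a (INR (S k) / sqrt (INR s))).

(* Birth-death process of the controlled s-server queue, lambda = s rho *)
Definition birth_rate (s : nat) (rho : R) (p : nat -> R) (k : nat) : R :=
  if Nat.ltb k s then INR s * rho else INR s * rho * p (k - s)%nat.

Definition death_rate (s : nat) (k : nat) : R := INR (Nat.min k s).

Definition global_balance (s : nat) (rho : R) (p : nat -> R) (pi : nat -> R) : Prop :=
  forall k : nat,
    pi k * (birth_rate s rho p k + death_rate s k) =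
    (match k with O => 0 | S j => pi j * birth_rate s rho p j end)
    + pi (S k) * death_rate s (S k).

(* The model is a well-defined CTMC (nonnegative rates) and it has a
   stationary distribution: a probability vector on N solving pi Q = 0. *)
Definition stationary_exists (s : nat) (rho : R) (p : nat -> R) : Prop :=
  (forall k, 0 <= birth_rate s rho p k) /\
  exists pi : nat -> R,
    (forall k, 0 <= pi k) /\ is_series pi 1 /\ global_balance s rho p pi.

(* Main.v *)
Require Import Defs.
From Stdlib Require Import Reals Lra Lia Classical FunctionalExtensionality.
From Coquelicot Require Import Coquelicot.
Open Scope R_scope.

Definition ind (h : R -> R) (t : R) (x : R) : R := if Rle_dec t (h x) then 1 else 0.

Lemma ind_int (h : R -> R) (Hh : forall x y, x <= y -> h x <= h y) t u v :
  u <= v -> ex_RInt (ind h t) u v.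
Proof.
  intros huv.
  destruct (Rle_dec t (h u)) as [H1|H1].
  - apply (ex_RInt_ext (fun _ => 1)); [|apply ex_RInt_const].
    intros x Hx. rewrite Rmin_left in Hx by lra. rewrite Rmax_right in Hx by lra.
    unfold ind. destruct (Rle_dec t (h x)) as [|n]; auto.
    exfalso; apply n. apply Rle_trans with (h u); auto. apply Hh; lra.
  - destruct (Rle_dec t (h v)) as [H2|H2].
    + set (T := fun x => x <= v /\ h x < t).
      assert (HB : bound T) by (exists v; intros x [Hx _]; auto).
      assert (HE : exists x, T x) by (exists u; split; [lra | apply Rnot_le_lt; auto]).
      destruct (completeness T HB HE) as [c [Hc1 Hc2]].
      assert (uc : u <= c) by (apply Hc1; split; [lra | apply Rnot_le_lt; auto]).
      assert (cv : c <= v) by (apply Hc2; intros x [Hx _]; auto).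
      apply ex_RInt_Chasles with c.
      * apply (ex_RInt_ext (fun _ => 0)); [|apply ex_RInt_const].
        intros x Hx. rewrite Rmin_left in Hx by lra. rewrite Rmax_right in Hx by lra.
        unfold ind. destruct (Rle_dec t (h x)) as [Ht|]; auto.
        destruct (classic (exists y, T y /\ x < y)) as [[y [[_ Hy] Hxy]]|Hn].
        -- exfalso. assert (h x <= h y) by (apply Hh; lra). lra.
        -- exfalso. assert (c <= x); [|lra].
           apply Hc2. intros y Ty. apply Rnot_lt_le. intro. apply Hn. exists y; auto.
      * apply (ex_RInt_ext (fun _ => 1)); [|apply ex_RInt_const].
        intros x Hx. rewrite Rmin_left in Hx by lra. rewrite Rmax_right in Hx by lra.
        unfold ind. destruct (Rle_dec t (h x)) as [|n]; auto.
        exfalso. assert (x <= c) by (apply Hc1; split; [lra| apply Rnot_le_lt; auto]). lra.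
    + apply (ex_RInt_ext (fun _ => 0)); [|apply ex_RInt_const].
      intros x Hx. rewrite Rmin_left in Hx by lra. rewrite Rmax_right in Hx by lra.
      unfold ind. destruct (Rle_dec t (h x)) as [Ht|]; auto.
      exfalso. apply H2. apply Rle_trans with (h x); auto. apply Hh; lra.
Qed.

Fixpoint stepval (m D : R) (N : nat) (y : R) : R :=
  match N with
  | O => m
  | S N' => stepval m D N' y + D * (if Rle_dec (m + INR (S N') * D) y then 1 else 0)
  end.

Lemma stepval_int (h : R -> R) (Hh : forall x y, x <= y -> h x <= h y) m D N u v :
  u <= v -> ex_RInt (fun x => stepval m D N (h x)) u v.
Proof.
  intros huv. induction N as [|N IH]; simpl.
  - apply ex_RInt_const.
  - apply (ex_RInt_plus (fun x => stepval m D N (h x))); auto.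
    apply (ex_RInt_scal (ind h (m + INR (S N) * D))). apply ind_int; auto.
Qed.

Lemma stepval_bound m D N y : 0 < D -> m <= y ->
  (m + INR N * D <= y -> stepval m D N y = m + INR N * D) /\
  (y < m + INR N * D -> y - D < stepval m D N y <= y).
Proof.
  intros HD Hy. induction N as [|N [IH1 IH2]].
  - simpl. split; intros; lra.
  - change (stepval m D (S N) y) with (stepval m D N y + D * (if Rle_dec (m + INR (S N) * D) y then 1 else 0)).
    destruct (Rle_dec (m + INR (S N) * D) y) as [r|r]; rewrite S_INR in *; split; intros H.
    + rewrite IH1 by nra. ring.
    + lra.
    + lra.
    + destruct (Rle_lt_dec (m + INR N * D) y) as [H'|H'].
      * rewrite IH1 by auto. lra.
      * specialize (IH2 H'). lra.
Qed.

Lemma mono_bounded_int (h : R -> R) (Hh : forall x y, x <= y -> h x <= h y) m M u v :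
  (forall x, m <= h x <= M) -> u <= v -> ex_RInt h u v.
Proof.
  intros Hb huv.
  set (f := fun (n : nat) (x : R) => stepval m ((M + 1 - m) / INR (S n)) (S n) (h x)).
  destruct (filterlim_RInt f u v eventually eventually_filter (h : fct_UniformSpace R R_UniformSpace)
     (fun n => RInt (f n) u v)) as [If [_ HI]].
  - intros n. apply RInt_correct. apply stepval_int; auto.
  - apply filterlim_locally. intros eps.
    assert (HM : 0 < M + 1 - m) by (specialize (Hb u); lra).
    destruct (archimed ((M + 1 - m) / eps)) as [Ha _].
    destruct (INR_unbounded (Rmax 0 (IZR (up ((M + 1 - m) / eps))))) as [N HN].
    exists N. intros n Hn t. unfold f.
    assert (Hn' : INR N <= INR n) by (apply le_INR; auto).
    assert (HSn : 0 < INR (S n)) by (apply lt_0_INR; lia).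
    set (D := (M + 1 - m) / INR (S n)).
    assert (HD : 0 < D) by (unfold D; apply Rdiv_lt_0_compat; auto).
    assert (HDe : D < eps).
    { unfold D. apply Rlt_div_l; auto. rewrite S_INR.
      assert ((M + 1 - m) / eps * eps = M + 1 - m) by (field; destruct eps; simpl; lra).
      assert (0 < eps) by (destruct eps; auto).
      assert ((M + 1 - m) / eps < INR n + 1) by (pose proof (Rmax_r 0 (IZR (up ((M + 1 - m) / eps)))); lra).
      nra. }
    assert (HmN : m + INR (S n) * D = M + 1) by (unfold D; field; lra).
    destruct (stepval_bound m D (S n) (h t) HD (proj1 (Hb t))) as [_ B2].
    specialize (Hb t).
    assert (Hlt : h t < m + INR (S n) * D) by lra.
    specialize (B2 Hlt).
    change (Rabs (stepval m D (S n) (h t) - h t) < eps).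
    apply Rabs_def1; lra.
  - exists If. exact HI.
Qed.

Lemma scal_R (a c : R) : scal a c = a * c.
Proof. reflexivity. Qed.
Lemma plus_R (a c : R) : plus a c = a + c.
Proof. reflexivity. Qed.

Section B.
Variable b : R -> R.
Hypothesis Hb0 : forall x, 0 <= b x.
Hypothesis Hbm : forall x y, x <= y -> b x <= b y.

Lemma b_int u v : ex_RInt b u v.
Proof.
  assert (H : forall u v, u <= v -> ex_RInt b u v).
  { clear u v. intros u v huv.
    apply (ex_RInt_ext (fun x => b (Rmin v (Rmax u x)))).
    - intros x Hx. rewrite Rmin_left in Hx by lra. rewrite Rmax_right in Hx by lra.
      rewrite Rmax_right by lra. rewrite Rmin_right by lra. auto.
    - apply mono_bounded_int with (b u) (b v); auto.
      + intros x y Hxy. apply Hbm. apply Rle_min_compat_l. apply Rle_max_compat_l. auto.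
      + intros x. split; apply Hbm.
        * apply Rmin_glb; [lra| apply Rmax_l].
        * apply Rmin_l. }
  destruct (Rle_dec u v); auto. apply ex_RInt_swap. apply H. lra.
Qed.

Definition A x := RInt b 0 x.

Lemma A0 : A 0 = 0.
Proof. unfold A. rewrite RInt_point. reflexivity. Qed.

Lemma A_diff x y : x <= y -> b x * (y - x) <= A y - A x <= b y * (y - x).
Proof.
  intros Hxy.
  assert (E : A y - A x = RInt b x y).
  { unfold A. rewrite <- (RInt_Chasles b 0 x y) by apply b_int. rewrite plus_R. ring. }
  rewrite E. split.
  - replace (b x * (y - x)) with (RInt (fun _ => b x) x y).
    + apply RInt_le; auto using b_int, ex_RInt_const. intros t Ht. apply Hbm. lra.
    + rewrite RInt_const. rewrite scal_R. apply Rmult_comm.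
  - replace (b y * (y - x)) with (RInt (fun _ => b y) x y).
    + apply RInt_le; auto using b_int, ex_RInt_const. intros t Ht. apply Hbm. lra.
    + rewrite RInt_const. rewrite scal_R. apply Rmult_comm.
Qed.

Lemma A_cont x0 : continuous A x0.
Proof.
  apply filterlim_locally. intros eps.
  set (M := b (x0 + 1)).
  assert (HM : 0 <= M) by apply Hb0.
  assert (Hd : 0 < Rmin 1 (eps / (M + 1))).
  { apply Rmin_glb_lt; [lra|]. apply Rdiv_lt_0_compat; [destruct eps; auto|lra]. }
  exists (mkposreal _ Hd). intros y Hy. change (Rabs (y - x0) < Rmin 1 (eps / (M + 1))) in Hy.
  change (Rabs (A y - A x0) < eps).
  assert (H1 : Rabs (y - x0) < 1) by (pose proof (Rmin_l 1 (eps / (M+1))); lra).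
  assert (H2 : Rabs (y - x0) < eps / (M + 1)) by (pose proof (Rmin_r 1 (eps / (M+1))); lra).
  assert (Hbnd : Rabs (A y - A x0) <= M * Rabs (y - x0)).
  { destruct (Rle_dec x0 y).
    - destruct (A_diff x0 y) as [D1 D2]; auto.
      assert (b x0 * (y - x0) >= 0) by (pose proof (Hb0 x0); nra).
      assert (b y <= M) by (apply Hbm; apply Rabs_def2 in H1; lra).
      rewrite Rabs_right by lra. rewrite Rabs_right by lra. nra.
    - destruct (A_diff y x0) as [D1 D2]; [lra|].
      assert (b y * (x0 - y) >= 0) by (pose proof (Hb0 y); nra).
      assert (b x0 <= M) by (apply Hbm; lra).
      rewrite Rabs_left1 by lra. rewrite Rabs_left1 by lra. nra. }
  assert (M * Rabs (y - x0) < eps).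
  { assert (HR : 0 <= Rabs (y - x0)) by apply Rabs_pos.
    assert (eps / (M+1) * (M+1) = eps) by (field; lra).
    nra. }
  lra.
Qed.

Definition G (g : R) (x : R) := exp (- g * x) * exp (- A x).

Lemma G_cont g x : continuous (G g) x.
Proof.
  unfold G. apply (continuous_mult (fun x => exp (- g * x)) (fun x => exp (- A x))).
  - apply (ex_derive_continuous (fun x : R => exp (- g * x))). auto_derive. auto.
  - apply (continuous_comp A (fun t => exp (- t))). apply A_cont.
    apply (ex_derive_continuous (fun t : R => exp (- t))). auto_derive. auto.
Qed.

Lemma G_int g u v : ex_RInt (G g) u v.
Proof. apply (@ex_RInt_continuous R_CompleteNormedModule). intros. apply G_cont. Qed.

End B.

Lemma minus_R (a c : R) : minus a c = a - c.
Proof. reflexivity. Qed.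

Lemma exp_le_exp x y : x <= y -> exp x <= exp y.
Proof. intros [H|H]. apply Rlt_le, exp_increasing; auto. subst; lra. Qed.

Section C.
Variable b : R -> R.
Hypothesis Hb0 : forall x, 0 <= b x.
Hypothesis Hbm : forall x y, x <= y -> b x <= b y.

Definition below_sup (d : R) := exists x0, 0 <= x0 /\ d < b x0.

Lemma A_nonneg t : 0 <= t -> 0 <= A b t.
Proof.
  intros Ht. destruct (A_diff b Hbm 0 t Ht) as [D _]. rewrite A0 in D.
  pose proof (Hb0 0). nra.
Qed.

Lemma growth d : below_sup d -> exists K, forall t, 0 <= t -> d * t - K <= A b t.
Proof.
  intros [x0 [Hx0 Hd]]. exists (Rabs d * x0). intros t Ht.
  pose proof (A_nonneg t Ht) as H0.
  destruct (Rle_dec x0 t).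
  - destruct (A_diff b Hbm x0 t) as [D _]; auto.
    pose proof (A_nonneg x0 Hx0).
    assert (d * (t - x0) <= b x0 * (t - x0)) by nra.
    assert (d * x0 <= Rabs d * x0) by (pose proof (Rle_abs d); nra).
    nra.
  - destruct (Rle_dec 0 d).
    + rewrite Rabs_right by lra. nra.
    + rewrite Rabs_left by lra. nra.
Qed.

Lemma upper c : (forall x, 0 <= x -> b x <= c) -> forall t, 0 <= t -> A b t <= c * t.
Proof.
  intros Hc t Ht. destruct (A_diff b Hbm 0 t Ht) as [_ D]. rewrite A0 in D.
  specialize (Hc t Ht). nra.
Qed.

Lemma G_eq g x : G b g x = exp (- g * x) * fa b x.
Proof. reflexivity. Qed.

Lemma LF1 d g : below_sup d -> - d < g -> L_finite b g.
Proof.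
  intros Hd Hg. destruct (growth d Hd) as [K HK].
  set (k := g + d). assert (Hk : 0 < k) by (unfold k; lra).
  set (E := exp K).
  assert (HE : 0 < E) by apply exp_pos.
  set (F := fun B => RInt (G b g) 0 B).
  assert (Gpos : forall x, 0 < G b g x).
  { intros x. unfold G. apply Rmult_lt_0_compat; apply exp_pos. }
  assert (Gle : forall x, 0 <= x -> G b g x <= E * exp (- k * x)).
  { intros x Hx. unfold G, E, k. rewrite <- !exp_plus. apply exp_le_exp.
    specialize (HK x Hx). nra. }
  assert (Fbd : forall B, 0 <= B -> F B <= E / k).
  { intros B HB.
    assert (HI : is_RInt (fun x => E * exp (- k * x)) 0 B
                   (minus ((fun x => - E / k * exp (- k * x)) B) ((fun x => - E / k * exp (- k * x)) 0))).
    { apply (is_RInt_derive (fun x => - E / k * exp (- k * x))).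
      - intros x _. auto_derive; auto. field. lra.
      - intros x _. apply (ex_derive_continuous (fun x0 : R => E * exp (- k * x0))). auto_derive. auto. }
    apply Rle_trans with (RInt (fun x => E * exp (- k * x)) 0 B).
    - apply RInt_le; auto. apply G_int; auto. exists (minus ((fun x => - E / k * exp (- k * x)) B) ((fun x => - E / k * exp (- k * x)) 0)). exact HI.
      intros x Hx. apply Gle. lra.
    - rewrite (is_RInt_unique _ _ _ _ HI). rewrite minus_R. simpl.
      replace (- k * 0) with 0 by ring. rewrite exp_0.
      assert (0 < exp (- k * B)) by apply exp_pos.
      assert (0 < E / k) by (apply Rdiv_lt_0_compat; auto).
      assert (- E / k * exp (- k * B) = - (E / k * exp (- k * B))) by (field; lra).
      nra. }
  assert (Fmono : forall B1 B2, 0 <= B1 <= B2 -> F B1 <= F B2).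
  { intros B1 B2 HB. unfold F. rewrite <- (RInt_Chasles (G b g) 0 B1 B2) by (apply G_int; auto).
    rewrite plus_R. assert (0 <= RInt (G b g) B1 B2); [|lra].
    apply RInt_ge_0; [lra| apply G_int; auto |]. intros. apply Rlt_le. auto. }
  set (S := fun y => exists B, 0 <= B /\ y = F B).
  assert (HB : bound S) by (exists (E / k); intros y [B [HB ->]]; auto).
  assert (HN : exists y, S y) by (exists (F 0); exists 0; split; [lra|auto]).
  destruct (completeness S HB HN) as [l [Hl1 Hl2]].
  exists l. intros P [eps HP].
  assert (Happ : exists B0, 0 <= B0 /\ l - eps < F B0).
  { destruct (classic (exists B0, 0 <= B0 /\ l - eps < F B0)) as [H|H]; auto.
    exfalso. assert (l <= l - eps); [|destruct eps; simpl in *; lra].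
    apply Hl2. intros y [B [HB' ->]]. apply Rnot_lt_le. intro. apply H. exists B; auto. }
  destruct Happ as [B0 [HB0 HF0]].
  apply (Filter_prod _ _ _ (fun x => x = 0) (fun y => B0 < y)).
  - reflexivity.
  - exists B0. auto.
  - intros x y -> Hy. exists (F y). split.
    + apply (@RInt_correct R_CompleteNormedModule). apply G_int; auto.
    + apply HP. change (Rabs (F y - l) < eps).
      assert (F B0 <= F y) by (apply Fmono; lra).
      assert (F y <= l) by (apply Hl1; exists y; split; [lra|auto]).
      apply Rabs_def1; destruct eps; simpl in *; lra.
Qed.

Lemma LF2 c g : (forall x, 0 <= x -> b x <= c) -> g <= - c -> ~ L_finite b g.
Proof.
  intros Hc Hg [l Hl].
  assert (Hloc : locally l (ball l (mkposreal 1 Rlt_0_1))) by apply locally_ball.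
  destruct (Hl _ Hloc) as [Q Qr HQ [M HM] HQR].
  set (y := Rmax (M + 1) (Rmax (l + 2) 1)).
  assert (Hy1 : M < y) by (unfold y; pose proof (Rmax_l (M+1) (Rmax (l+2) 1)); lra).
  assert (Hy2 : l + 2 <= y) by (unfold y; pose proof (Rmax_r (M+1) (Rmax (l+2) 1)); pose proof (Rmax_l (l+2) 1); lra).
  assert (Hy3 : 1 <= y) by (unfold y; pose proof (Rmax_r (M+1) (Rmax (l+2) 1)); pose proof (Rmax_r (l+2) 1); lra).
  destruct (HQR 0 y HQ (HM y Hy1)) as [z [Hz Hzl]]. simpl in Hz.
  change (Rabs (z - l) < 1) in Hzl.
  rewrite <- (is_RInt_unique _ _ _ _ Hz) in Hzl.
  assert (y <= RInt (fun x => exp (- g * x) * fa b x) 0 y); [|apply Rabs_def2 in Hzl; lra].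
  replace y with (RInt (fun _ => 1) 0 y) at 1 by (rewrite RInt_const, scal_R, Rminus_0_r; apply Rmult_1_r).
  apply RInt_le; [lra| apply ex_RInt_const | apply (G_int b Hb0 Hbm) |].
  intros x Hx. change (1 <= G b g x). unfold G. rewrite <- exp_plus. rewrite <- exp_0.
  apply exp_le_exp. pose proof (upper c Hc x ltac:(lra)). nra.
Qed.

End C.

Lemma pow_exp (x : R) n : 0 < x -> x ^ n = exp (INR n * ln x).
Proof. intros Hx. rewrite <- Rpower_pow by auto. reflexivity. Qed.

Lemma not_series_ge1 (u : nat -> R) : (forall n, 1 <= u n) -> ~ ex_series u.
Proof.
  intros Hu Hs. apply ex_series_lim_0 in Hs.
  pose proof (is_lim_seq_le (fun _ => 1) u 1 0 Hu (is_lim_seq_const 1) Hs). simpl in H. lra.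
Qed.

Lemma ex_series_le_R (a c : nat -> R) : (forall n, Rabs (a n) <= c n) -> ex_series c -> ex_series a.
Proof. intros. apply (@ex_series_le R_AbsRing R_CompleteNormedModule a c); auto. Qed.

Lemma ex_series_geom_scal (k q : R) : 0 <= q < 1 -> ex_series (fun n => k * q ^ n).
Proof.
  intros Hq. apply (ex_series_ext (fun n => scal k (q ^ n))). intros; reflexivity.
  apply (@ex_series_scal R_AbsRing R_NormedModule). apply ex_series_geom. rewrite Rabs_right; lra.
Qed.

Section D.
Variable b : R -> R.
Hypothesis Hb0 : forall x, 0 <= b x.
Hypothesis Hbm : forall x y, x <= y -> b x <= b y.
Variable s : nat.
Hypothesis Hs : (1 <= s)%nat.

Lemma r_pos : 0 < sqrt (INR s).
Proof. apply sqrt_lt_R0. apply lt_0_INR. lia. Qed.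

Definition gterm rho n := rho ^ (S n) * fa b (INR (S n) / sqrt (INR s)).

Lemma S1 d rho : below_sup b d -> 0 < rho -> sqrt (INR s) * ln rho < d -> ex_series (gterm rho).
Proof using Hb0 Hbm Hs.
  intros Hd Hr Hlt. pose proof r_pos as Hr0. set (r := sqrt (INR s)) in *.
  destruct (growth b Hb0 Hbm d Hd) as [K HK].
  set (q := exp (ln rho - d / r)).
  assert (Hq0 : 0 < q) by apply exp_pos.
  assert (Hq1 : q < 1).
  { unfold q. rewrite <- exp_0. apply exp_increasing.
    assert (d / r * r = d) by (field; lra). nra. }
  apply (ex_series_le_R _ (fun n => exp K * q * q ^ n)).
  - intros n.
    unfold gterm. rewrite Rabs_right.
    2:{ apply Rle_ge. apply Rmult_le_pos. apply pow_le; lra. unfold fa. apply Rlt_le, exp_pos. }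
    replace (exp K * q * q ^ n) with (exp K * q ^ (S n)) by (simpl; ring).
    rewrite !pow_exp by auto. unfold q. rewrite ln_exp. unfold fa.
    rewrite <- !exp_plus. apply exp_le_exp.
    assert (Ht : 0 <= INR (S n) / r) by (apply Rdiv_le_0_compat; [apply pos_INR|auto]).
    specialize (HK _ Ht). change (RInt b 0 (INR (S n) / r)) with (A b (INR (S n) / r)).
    assert (d * (INR (S n) / r) = INR (S n) * (d / r)) by (field; lra).
    fold r. change (RInt b 0 (INR (S n) / r)) with (A b (INR (S n) / r)). lra.
  - apply ex_series_geom_scal; lra.
Qed.

Lemma S2 c rho : (forall x, 0 <= x -> b x <= c) -> 0 < rho -> c <= sqrt (INR s) * ln rho -> ~ ex_series (gterm rho).
Proof using Hb0 Hbm Hs.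
  intros Hc Hr Hle. pose proof r_pos as Hr0. set (r := sqrt (INR s)) in *.
  apply not_series_ge1. intros n. unfold gterm, fa.
  rewrite pow_exp by auto. rewrite <- exp_plus, <- exp_0. apply exp_le_exp.
  assert (Ht : 0 <= INR (S n) / r) by (apply Rdiv_le_0_compat; [apply pos_INR|auto]).
  pose proof (upper b Hbm c Hc _ Ht) as HU. change (RInt b 0 (INR (S n) / r)) with (A b (INR (S n) / r)).
  assert (c * (INR (S n) / r) = INR (S n) * (c / r)) by (field; lra).
  assert (c / r <= ln rho) by (apply Rle_div_l; [auto| nra]).
  assert (0 <= INR (S n)) by apply pos_INR.
  fold r. change (RInt b 0 (INR (S n) / r)) with (A b (INR (S n) / r)). nra.
Qed.

Definition lterm rho n := rho ^ (S n) * prefix_prod (local_control b s) n.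

Lemma lc_pos k : 0 < local_control b s k.
Proof.
  unfold local_control. pose proof r_pos. apply Rinv_0_lt_compat.
  pose proof (Hb0 (INR (S k) / sqrt (INR s))).
  assert (0 <= / sqrt (INR s)) by (apply Rlt_le, Rinv_0_lt_compat; auto). nra.
Qed.

Lemma prefix_pos (p : nat -> R) : (forall k, 0 < p k) -> forall n, 0 < prefix_prod p n.
Proof. intros Hp n. induction n; simpl; auto. apply Rmult_lt_0_compat; auto. Qed.

Lemma lterm_S rho n : lterm rho (S n) = lterm rho n * (rho * local_control b s (S n)).
Proof. unfold lterm. simpl. ring. Qed.

Lemma lterm_pos rho n : 0 < rho -> 0 < lterm rho n.
Proof.
  intros. unfold lterm. apply Rmult_lt_0_compat. apply pow_lt; auto.
  apply prefix_pos. apply lc_pos.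
Qed.

Lemma T1 d rho : below_sup b d -> 0 < rho -> rho < 1 + d / sqrt (INR s) -> ex_series (lterm rho).
Proof using Hb0 Hbm Hs.
  intros [x0 [Hx0 Hd]] Hr Hlt. pose proof r_pos as Hr0. set (r := sqrt (INR s)) in *.
  destruct (INR_unbounded (x0 * r)) as [N HN].
  set (q := rho / (1 + d / r)).
  assert (Hden : 0 < 1 + d / r) by lra.
  assert (Hq0 : 0 < q) by (apply Rdiv_lt_0_compat; auto).
  assert (Hq1 : q < 1) by (apply Rlt_div_l; lra).
  assert (Hstep : forall k, (N <= k)%nat -> rho * local_control b s k <= q).
  { intros k Hk. unfold local_control, q. fold r.
    assert (Hx : x0 <= INR (S k) / r).
    { apply Rle_div_r; auto. assert (INR N <= INR (S k)) by (apply le_INR; lia). lra. }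
    assert (b x0 <= b (INR (S k) / r)) by (apply Hbm; auto).
    assert (d / r <= / r * b (INR (S k) / r)).
    { unfold Rdiv. rewrite Rmult_comm. apply Rmult_le_compat_l. apply Rlt_le, Rinv_0_lt_compat; auto. lra. }
    unfold Rdiv at 3.
    apply Rmult_le_compat_l; [lra|]. apply Rinv_le_contravar; lra. }
  apply (ex_series_incr_n _ N).
  apply (ex_series_le_R _ (fun m => lterm rho N * q ^ m)).
  - intros m.
    rewrite Rabs_right by (apply Rle_ge, Rlt_le, lterm_pos; auto).
    induction m.
    + rewrite Nat.add_0_r. simpl. lra.
    + rewrite <- plus_n_Sm, lterm_S. simpl.
      specialize (Hstep (S (N + m)) ltac:(lia)).
      pose proof (lterm_pos rho (N + m) Hr).
      pose proof (lc_pos (S (N + m))).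
      assert (0 <= lterm rho N * q ^ m) by lra.
      nra.
  - apply ex_series_geom_scal; lra.
Qed.

Lemma T2 c rho : (forall x, 0 <= x -> b x <= c) -> 1 + c / sqrt (INR s) <= rho -> ~ ex_series (lterm rho).
Proof using Hb0 Hbm Hs.
  intros Hc Hle. pose proof r_pos as Hr0. set (r := sqrt (INR s)) in *.
  assert (Hstep : forall k, 1 <= rho * local_control b s k).
  { intros k. unfold local_control. fold r.
    assert (Ht : 0 <= INR (S k) / r) by (apply Rdiv_le_0_compat; [apply pos_INR|auto]).
    pose proof (Hc _ Ht). pose proof (Hb0 (INR (S k) / r)).
    assert (/ r * b (INR (S k) / r) <= c / r).
    { unfold Rdiv. rewrite (Rmult_comm c). apply Rmult_le_compat_l; auto. apply Rlt_le, Rinv_0_lt_compat; auto. }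
    assert (0 <= / r * b (INR (S k) / r)) by (apply Rmult_le_pos; auto; apply Rlt_le, Rinv_0_lt_compat; auto).
    set (z := 1 + / r * b (INR (S k) / r)) in *.
    assert (Hz : 0 < z) by (unfold z; lra).
    apply (Rmult_le_reg_r z); auto. rewrite Rmult_assoc, Rinv_l by lra. unfold z. lra. }
  apply not_series_ge1. intros n. induction n.
  - unfold lterm. simpl. rewrite Rmult_1_r. apply Hstep.
  - rewrite lterm_S. specialize (Hstep (S n)). nra.
Qed.

End D.

Lemma is_series_zero : is_series (fun _ : nat => 0) 0.
Proof.
  assert (H : Rabs 0 < 1) by (rewrite Rabs_R0; lra).
  pose proof (@is_series_scal R_AbsRing R_NormedModule 0 _ _ (is_series_geom 0 H)) as H2.
  apply (is_series_ext _ _ _ (fun n => Rmult_0_l _)) in H2. change (scal 0 (/ (1 - 0)) ) with (0 * / (1 - 0)) in H2.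
  rewrite Rmult_0_l in H2. exact H2.
Qed.

Lemma Series_nonneg_ge0 (a : nat -> R) : (forall n, 0 <= a n) -> ex_series a -> 0 <= Series a.
Proof.
  intros Ha He. rewrite <- (is_series_unique _ _ is_series_zero).
  apply Series_le; auto. intros n; split; [lra|auto].
Qed.

Section Q.
Variable s : nat.
Hypothesis Hs : (1 <= s)%nat.
Variable rho : R.
Variable p : nat -> R.
Hypothesis Hp : forall k, 0 < p k.

Let br k := birth_rate s rho p k.
Let dr k := death_rate s k.

Fixpoint w (k : nat) : R :=
  match k with
  | O => 1
  | S k' => w k' * birth_rate s rho p k' / death_rate s (S k')
  end.

Lemma dr_pos k : 0 < death_rate s (S k).
Proof. unfold death_rate. apply lt_0_INR. lia. Qed.

Lemma dr_0 : death_rate s 0 = 0.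
Proof. reflexivity. Qed.

Lemma br_0 : birth_rate s rho p 0 = INR s * rho.
Proof. unfold birth_rate. destruct s as [|s']; [lia|]. reflexivity. Qed.

Lemma w_step k : (s <= k)%nat -> w (S k) = w k * (rho * p (k - s)).
Proof.
  intros Hk. simpl. unfold birth_rate, death_rate.
  replace (Nat.ltb k s) with false by (symmetry; apply Nat.ltb_ge; auto).
  replace (Nat.min (S k) s) with s by lia.
  assert (0 < INR s) by (apply lt_0_INR; lia). field. lra.
Qed.

Lemma w_tail n : w (s + S n) = w s * (rho ^ (S n) * prefix_prod p n).
Proof.
  induction n.
  - rewrite <- plus_n_Sm, Nat.add_0_r. rewrite w_step by lia. rewrite Nat.sub_diag. simpl. ring.
  - rewrite <- plus_n_Sm. rewrite w_step by lia.
    replace (s + S n - s)%nat with (S n) by lia. rewrite IHn. simpl. ring.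
Qed.

Lemma br_nonneg : 0 <= rho -> forall k, 0 <= birth_rate s rho p k.
Proof.
  intros Hr k. unfold birth_rate. assert (0 <= INR s) by apply pos_INR.
  destruct (Nat.ltb k s). nra. pose proof (Hp (k - s)%nat). apply Rmult_le_pos; nra.
Qed.

Lemma br_pos : 0 < rho -> forall k, 0 < birth_rate s rho p k.
Proof.
  intros Hr k. unfold birth_rate. assert (0 < INR s) by (apply lt_0_INR; lia).
  destruct (Nat.ltb k s). nra. pose proof (Hp (k - s)%nat). apply Rmult_lt_0_compat; nra.
Qed.

Lemma w_nonneg : 0 <= rho -> forall k, 0 <= w k.
Proof.
  intros Hr k. induction k; simpl. lra.
  apply Rmult_le_pos. apply Rmult_le_pos; auto. apply br_nonneg; auto.
  apply Rlt_le, Rinv_0_lt_compat, dr_pos.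
Qed.

Lemma w_pos : 0 < rho -> forall k, 0 < w k.
Proof.
  intros Hr k. induction k; simpl. lra.
  apply Rmult_lt_0_compat. apply Rmult_lt_0_compat; auto. apply br_pos; auto.
  apply Rinv_0_lt_compat, dr_pos.
Qed.

Lemma DB_balance (pi : nat -> R) :
  (forall k, pi (S k) * death_rate s (S k) = pi k * birth_rate s rho p k) ->
  global_balance s rho p pi.
Proof.
  intros H k. destruct k.
  - rewrite dr_0. rewrite H. ring.
  - rewrite (H (S k)), <- (H k). ring.
Qed.

Lemma balance_DB (pi : nat -> R) : global_balance s rho p pi ->
  forall k, pi (S k) * death_rate s (S k) = pi k * birth_rate s rho p k.
Proof.
  intros H k. induction k.
  - specialize (H 0%nat). rewrite dr_0 in H. simpl in H. lra.
  - specialize (H (S k)). lra.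
Qed.

Lemma series_iff :
  stationary_exists s rho p <-> 0 <= rho /\ ex_series (fun n => rho ^ (S n) * prefix_prod p n).
Proof.
  split.
  - intros [Hb [pi [Hpos [Hser Hbal]]]].
    assert (Hr : 0 <= rho).
    { specialize (Hb 0%nat). rewrite br_0 in Hb. assert (0 < INR s) by (apply lt_0_INR; lia). nra. }
    split; auto.
    pose proof (balance_DB pi Hbal) as HDB.
    assert (Hpw : forall k, pi k = pi 0%nat * w k).
    { intros k. induction k. simpl. ring.
      simpl. pose proof (dr_pos k). specialize (HDB k).
      apply (Rmult_eq_reg_r (death_rate s (S k))); [|lra].
      rewrite HDB, IHk. field. lra. }
    assert (Hp0 : pi 0%nat <> 0).
    { intros H0. assert (E : forall n, (fun _ : nat => 0) n = pi n) by (intros n; rewrite Hpw, H0; ring).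
      pose proof (is_series_ext _ _ _ E is_series_zero) as Z.
      apply is_series_unique in Z. apply is_series_unique in Hser. lra. }
    assert (Hw : ex_series w).
    { apply (ex_series_ext (fun n => scal (/ pi 0%nat) (pi n))).
      - intros n. change (/ pi 0%nat * pi n = w n). rewrite (Hpw n). field. auto.
      - apply (@ex_series_scal R_AbsRing R_NormedModule). exists 1. auto. }
    destruct Hr as [Hr|Hr].
    + apply (ex_series_incr_n _ (S s)) in Hw.
      apply (ex_series_ext (fun n => scal (/ w s) (w (S s + n)))).
      * intros n. change (/ w s * w (S s + n) = rho ^ S n * prefix_prod p n).
        replace (S s + n)%nat with (s + S n)%nat by lia. rewrite w_tail.
        pose proof (w_pos Hr s). field. lra.
      * apply (@ex_series_scal R_AbsRing R_NormedModule). auto.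
    + apply (ex_series_ext (fun _ => 0)).
      * intros n. rewrite <- Hr. simpl. ring.
      * exists 0. apply is_series_zero.
  - intros [Hr Hu]. split; [apply br_nonneg; auto|].
    assert (Hw : ex_series w).
    { apply (ex_series_incr_n _ (S s)).
      apply (ex_series_ext (fun n => scal (w s) (rho ^ S n * prefix_prod p n))).
      - intros n. change (w s * (rho ^ S n * prefix_prod p n) = w (S s + n)).
        replace (S s + n)%nat with (s + S n)%nat by lia. rewrite w_tail. ring.
      - apply (@ex_series_scal R_AbsRing R_NormedModule). auto. }
    set (Sw := Series w).
    assert (HSw : 1 <= Sw).
    { unfold Sw. rewrite Series_incr_1 by auto. simpl w at 1.
      assert (0 <= Series (fun k => w (S k))); [|lra].
      apply Series_nonneg_ge0. intros; apply w_nonneg; auto.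
      apply (ex_series_incr_1 w). auto. }
    exists (fun k => w k / Sw). split; [|split].
    + intros k. apply Rdiv_le_0_compat. apply w_nonneg; auto. lra.
    + pose proof (@is_series_scal R_AbsRing R_NormedModule (/ Sw) _ _ (Series_correct _ Hw)) as H.
      change (scal (/ Sw) (Series w)) with (/ Sw * Sw) in H.
      rewrite Rinv_l in H by lra.
      apply (is_series_ext _ _ _ (fun n => Rmult_comm _ _)) in H. exact H.
    + apply DB_balance. intros k. simpl. pose proof (dr_pos k). field. lra.
Qed.

End Q.

Lemma big_O_part (g : R) : exists C : R, forall s' : nat, (1 <= s')%nat ->
  Rabs (exp (- g / sqrt (INR s')) - (1 - g / sqrt (INR s'))) <= C / INR s'.
Proof.
  exists (g ^ 2 * exp (Rabs g)). intros s' Hs'.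
  assert (H1 : 1 <= INR s') by (apply (le_INR 1); auto).
  assert (Hq : 1 <= sqrt (INR s')) by (rewrite <- sqrt_1; apply sqrt_le_1_alt; auto).
  set (q := sqrt (INR s')) in *.
  assert (Hqq : q * q = INR s') by (apply sqrt_sqrt; lra).
  set (x := - g / q).
  assert (E1 : 1 - g / q = 1 + x) by (unfold x, Rdiv; ring).
  rewrite E1.
  assert (Hx2 : x * x * INR s' = g ^ 2) by (unfold x; rewrite <- Hqq; field; lra).
  assert (Hxg : Rabs x <= Rabs g).
  { unfold x, Rdiv. rewrite Rabs_mult, Rabs_Ropp, Rabs_inv, (Rabs_right q) by lra.
    assert (0 < / q <= 1) by (split; [apply Rinv_0_lt_compat; lra| rewrite <- Rinv_1; apply Rinv_le_contravar; lra]).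
    pose proof (Rabs_pos g). nra. }
  set (e := exp x).
  assert (Ha : 1 + x <= e) by apply exp_ineq1_le.
  assert (Hb : 1 - x <= exp (- x)) by (replace (1 - x) with (1 + - x) by ring; apply exp_ineq1_le).
  assert (Hc : e * exp (- x) = 1) by (unfold e; rewrite <- exp_plus; replace (x + - x) with 0 by ring; apply exp_0).
  assert (He0 : 0 < e) by apply exp_pos.
  assert (Hd : e - 1 <= x * e) by nra.
  assert (HG : e <= exp (Rabs g)) by (apply exp_le_exp; pose proof (Rle_abs x); lra).
  assert (HG1 : 1 <= exp (Rabs g)) by (rewrite <- exp_0; apply exp_le_exp, Rabs_pos).
  assert (Hup : e - (1 + x) <= x * x * exp (Rabs g)).
  { destruct (Rle_dec 0 x).
    - assert (x * (e - 1) <= x * x * e) by nra. nra.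
    - assert (x * (e - 1) <= x * x) by nra. assert (0 <= x * x) by nra. nra. }
  rewrite Rabs_right by lra.
  apply Rle_trans with (x * x * exp (Rabs g)); auto.
  apply Req_le. rewrite <- Hx2. field. lra.
Qed.

Definition ext0 (a : R -> R) (x : R) := a (Rmax 0 x).

Lemma ex_series_zero_pow (X : nat -> R) : ex_series (fun n => 0 ^ S n * X n).
Proof. apply (ex_series_ext (fun _ => 0)). intros; simpl; ring. exists 0. apply is_series_zero. Qed.

Lemma sup_cases (b : R -> R) (Hb0 : forall x, 0 <= b x) (Hbm : forall x y, x <= y -> b x <= b y) :
  (exists c, (forall x, 0 <= x -> b x <= c) /\ (forall d, d < c -> below_sup b d)
     /\ gamma_min b = Finite (- c) /\ 0 <= c)
  \/ ((forall d, below_sup b d) /\ gamma_min b = m_infty).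
Proof.
  destruct (classic (exists M, forall x, 0 <= x -> b x <= M)) as [[M HM]|HU].
  - left. set (E := fun y => exists x, 0 <= x /\ y = b x).
    assert (HB : bound E) by (exists M; intros y [x [Hx ->]]; auto).
    assert (HN : exists y, E y) by (exists (b 0); exists 0; split; [lra|auto]).
    destruct (completeness E HB HN) as [c [Hc1 Hc2]].
    assert (Hup : forall x, 0 <= x -> b x <= c) by (intros x Hx; apply Hc1; exists x; auto).
    assert (Hbel : forall d, d < c -> below_sup b d).
    { intros d Hd. destruct (classic (below_sup b d)) as [|Hn]; auto. exfalso.
      assert (c <= d); [|lra]. apply Hc2. intros y [x [Hx ->]].
      apply Rnot_lt_le. intro. apply Hn. exists x. auto. }
    exists c. split; [|split; [|split]]; auto.
    + unfold gamma_min. apply is_glb_Rbar_unique. split.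
      * intros g Hg. simpl. apply Rnot_lt_le. intro. apply (LF2 b Hb0 Hbm c g Hup); [lra|auto].
      * intros l Hl. destruct l as [l| |]; simpl; auto.
        -- apply Rnot_lt_le. intro. 
           assert (HLf : L_finite b ((l + - c) / 2)).
           { apply (LF1 b Hb0 Hbm ((c + - ((l + - c) / 2)) / 2)); [apply Hbel|]; lra. }
           specialize (Hl _ HLf). simpl in Hl. lra.
        -- assert (HLf : L_finite b (- c + 1)) by (apply (LF1 b Hb0 Hbm (c - 1/2)); [apply Hbel|]; lra).
           specialize (Hl _ HLf). simpl in Hl. auto.
    + apply Rle_trans with (b 0); auto. apply Hup; lra.
  - right.
    assert (Hbel : forall d, below_sup b d).
    { intros d. destruct (classic (below_sup b d)) as [|Hn]; auto. exfalso. apply HU. exists d.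
      intros x Hx. apply Rnot_lt_le. intro. apply Hn. exists x. auto. }
    split; auto. unfold gamma_min. apply is_glb_Rbar_unique. split.
    + intros g _. simpl. auto.
    + intros l Hl. destruct l as [l| |]; simpl; auto.
      * assert (HLf : L_finite b (l - 1)) by (apply (LF1 b Hb0 Hbm (- l + 2)); [apply Hbel|]; lra).
        specialize (Hl _ HLf). simpl in Hl. lra.
      * assert (HLf : L_finite b 0) by (apply (LF1 b Hb0 Hbm 1); [apply Hbel|]; lra).
        specialize (Hl _ HLf). simpl in Hl. auto.
Qed.

Theorem proposition3p1
  (a : R -> R)
  (Ha_nonneg : forall x, 0 <= x -> 0 <= a x)
  (Ha_mono : forall x y, 0 <= x -> x <= y -> a x <= a y)
  (s : nat) (Hs : (1 <= s)%nat) :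
  (* (i) global control *)
  (forall (p : nat -> R),
     (forall n : nat, prefix_prod p n = fa a (INR (S n) / sqrt (INR s))) ->
     forall rho : R,
       stationary_exists s rho p <->
       (0 <= rho /\ Rbar_lt (Finite rho) (global_bound a s)))
  /\
  (* e^{-gamma_min/sqrt s} = 1 - gamma_min/sqrt s + O(1/s) (gamma_min finite) *)
  (forall g : R, gamma_min a = Finite g ->
     exists C : R, forall s' : nat, (1 <= s')%nat ->
       Rabs (exp (- g / sqrt (INR s')) - (1 - g / sqrt (INR s'))) <= C / INR s')
  /\
  (* (ii) local control *)
  (forall rho : R,
     stationary_exists s rho (local_control a s) <->
     (0 <= rho /\ Rbar_lt (Finite rho) (local_bound a s))).
Proof.
  set (b := ext0 a).
  assert (Hb0 : forall x, 0 <= b x) by (intros; apply Ha_nonneg, Rmax_l).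
  assert (Hbm : forall x y, x <= y -> b x <= b y).
  { intros x y H. apply Ha_mono. apply Rmax_l. apply Rle_max_compat_l. auto. }
  assert (Hab : forall x, 0 <= x -> a x = b x) by (intros; unfold b, ext0; rewrite Rmax_right; auto).
  assert (Hfa : forall x, 0 <= x -> fa a x = fa b x).
  { intros x Hx. unfold fa. f_equal. f_equal. apply RInt_ext.
    intros y Hy. rewrite Rmin_left in Hy by auto. apply Hab. lra. }
  assert (HL : forall g, L_finite a g <-> L_finite b g).
  { intros g.
    assert (Hf : forall (u v : R -> R), (forall x, 0 < x -> u x = v x) ->
      filter_prod (at_point 0) (Rbar_locally p_infty)
       (fun ab : R * R => forall x, Rmin (fst ab) (snd ab) < x < Rmax (fst ab) (snd ab) ->
          u x = v x)).
    { intros u v Huv. apply (Filter_prod _ _ _ (fun x => x = 0) (fun y => 0 < y)).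
      - reflexivity.
      - exists 0. auto.
      - intros x y -> Hy z Hz. simpl in Hz. rewrite Rmin_left in Hz by lra. apply Huv. lra. }
    unfold L_finite. split; intros H; eapply ex_RInt_gen_ext; try exact H; apply Hf;
      intros x Hx; rewrite Hfa by lra; reflexivity. }
  assert (Hgm : gamma_min a = gamma_min b) by (apply Glb_Rbar_eqset; auto).
  assert (Hlc : local_control a s = local_control b s).
  { apply functional_extensionality. intros k. unfold local_control. rewrite Hab; auto.
    apply Rdiv_le_0_compat. apply pos_INR. apply r_pos; auto. }
  pose proof (r_pos s Hs) as Hr0. 
  split; [|split].
  3: { intros rho. rewrite Hlc. rewrite (series_iff s Hs rho _ (lc_pos b Hb0 s Hs)).
       unfold local_bound. rewrite Hgm.
       destruct (Rle_lt_dec rho 0) as [Hr|Hr].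
       { split; intros [H1 H2]; [|split; auto].
         - assert (rho = 0) by lra. subst rho. split; [lra|].
           destruct (sup_cases b Hb0 Hbm) as [[c [_ [_ [-> Hc]]]]|[_ ->]]; simpl; auto.
           assert (0 <= - - c / sqrt (INR s)) by (apply Rdiv_le_0_compat; lra). lra.
         - assert (rho = 0) by lra. subst rho. apply (ex_series_zero_pow (prefix_prod (local_control b s))). }
       destruct (sup_cases b Hb0 Hbm) as [[c [Hup [Hbel [-> Hc]]]]|[Hbel ->]]; simpl.
       - replace (1 - - c / sqrt (INR s)) with (1 + c / sqrt (INR s)) by (unfold Rdiv; ring).
         split; intros [H1 H2]; split; auto.
         + apply Rnot_le_lt. intro. apply (T2 b Hb0 Hbm s Hs c rho Hup); auto.
         + apply (T1 b Hb0 Hbm s Hs ((sqrt (INR s) * (rho - 1) + c) / 2) rho); auto.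
           * apply Hbel. assert (rho - 1 < c / sqrt (INR s)) by lra.
             assert (sqrt (INR s) * (rho - 1) < c); [|lra].
             apply (Rmult_lt_reg_r (/ sqrt (INR s))). apply Rinv_0_lt_compat; auto.
             rewrite Rmult_comm, <- Rmult_assoc, Rinv_l by lra. lra.
           * replace ((sqrt (INR s) * (rho - 1) + c) / 2 / sqrt (INR s)) with ((rho - 1) / 2 + c / sqrt (INR s) / 2) by (field; lra). lra.
       - split; intros [H1 H2]; split; auto.
         apply (T1 b Hb0 Hbm s Hs (sqrt (INR s) * rho) rho); auto.
         replace (sqrt (INR s) * rho / sqrt (INR s)) with rho by (field; lra). lra. }
  2: { intros; apply big_O_part. }
  intros p Hp rho.
  assert (Hpp : forall k, 0 < p k).
  { intros k. destruct k.
    - change (p 0%nat) with (prefix_prod p 0). rewrite Hp. unfold fa. apply exp_pos.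
    - assert (H1 : 0 < prefix_prod p (S k)) by (rewrite Hp; apply exp_pos).
      assert (H2 : 0 < prefix_prod p k) by (rewrite Hp; apply exp_pos).
      simpl in H1. destruct (Rlt_le_dec 0 (p (S k))); auto. nra. }
  rewrite (series_iff s Hs rho p Hpp).
  assert (Heq : forall rho, ex_series (fun n => rho ^ S n * prefix_prod p n) <-> ex_series (gterm b s rho)).
  { intros r. split; apply ex_series_ext; intros n; unfold gterm; rewrite Hp, Hfa; auto;
      apply Rdiv_le_0_compat; auto; apply pos_INR. }
  rewrite Heq. unfold global_bound. rewrite Hgm.
  destruct (Rle_lt_dec rho 0) as [Hr|Hr].
  { split; intros [H1 H2]; [|split; auto].
    - assert (rho = 0) by lra. subst rho. split; [lra|].
      destruct (sup_cases b Hb0 Hbm) as [[c [_ [_ [-> Hc]]]]|[_ ->]]; simpl; auto. apply exp_pos.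
    - assert (rho = 0) by lra. subst rho. apply (ex_series_ext (fun _ => 0)).
      + intros n; unfold gterm; simpl; ring.
      + exists 0. apply is_series_zero. }
  destruct (sup_cases b Hb0 Hbm) as [[c [Hup [Hbel [-> Hc]]]]|[Hbel ->]]; simpl.
  - replace (- - c / sqrt (INR s)) with (c / sqrt (INR s)) by (unfold Rdiv; ring).
    split; intros [H1 H2]; split; auto.
    + apply Rnot_le_lt. intro H3. apply (S2 b Hb0 Hbm s Hs c rho Hup); auto.
      assert (c / sqrt (INR s) <= ln rho).
      { rewrite <- (ln_exp (c / sqrt (INR s))). destruct H3 as [H3|H3].
        - apply Rlt_le, ln_increasing; auto. apply exp_pos.
        - rewrite H3. lra. }
      apply (Rmult_le_reg_r (/ sqrt (INR s))). apply Rinv_0_lt_compat; auto.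
      rewrite (Rmult_comm (sqrt (INR s))), Rmult_assoc, Rinv_r by lra. lra.
    + assert (Hl : ln rho < c / sqrt (INR s)).
      { rewrite <- (ln_exp (c / sqrt (INR s))). apply ln_increasing; auto. }
      assert (Hl2 : sqrt (INR s) * ln rho < c).
      { apply (Rmult_lt_reg_r (/ sqrt (INR s))). apply Rinv_0_lt_compat; auto.
        rewrite (Rmult_comm (sqrt (INR s))), Rmult_assoc, Rinv_r by lra. lra. }
      apply (S1 b Hb0 Hbm s Hs ((sqrt (INR s) * ln rho + c) / 2)); auto.
      apply Hbel. lra. lra.
  - split; intros [H1 H2]; split; auto.
    apply (S1 b Hb0 Hbm s Hs (sqrt (INR s) * ln rho + 1)); auto. lra.
Qed.
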